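(* Let $A$ be an $n\times n$ matrix over $\mathbb{C}$ (or $\mathbb{R}$) such that $A^3\neq 0$. Then the following are equivalent: (i) $A\otimes A^3\otimes A^2=A^2\otimes A^3\otimes A$; (ii) $A^2\otimes A=A\otimes A^2$; (iii) $A^2=\mu A$ for some scalar $\mu$.
   Context: Here $\otimes$ denotes the Kronecker product of matrices: for matrices $A=[a_{ij}]$ and $B$, $A\otimes B$ is the block matrix whose $(i,j)$ block is $a_{ij}B$. *)

(* Defs.v *)
From HB Require Import structures.
From mathcomp Require Import all_boot all_order all_algebra.
From mathcomp Require Export mxtens.
Set Implicit Arguments. Unset Strict Implicit. Unset Printing Implicit Defensive.
(* Kronecker product: mathcomp-real-closed's [tensmx], notation [A *t B]:
   (A *t B) (i1*p+i2) (j1*q+j2) = A i1 j1 * B i2 j2  (block (i,j) = a_ij B). *)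

(* Main.v *)
Require Import Defs.
From mathcomp Require Import all_boot all_order all_algebra.
Import GRing.Theory Num.Theory.
Local Open Scope ring_scope.

Lemma tens_eqP (R : numFieldType) m n p q (X Z : 'M[R]_(m,n)) (Y W : 'M[R]_(p,q)) :
  tensmx X Y = tensmx Z W <-> forall i k j l, X i k * Y j l = Z i k * W j l.
Proof.
split.
  by move=> E i k j l; rewrite -!tensmxE E.
move=> H; apply/matrixP=> a b.
case: (mxtens_indexP a) => i j; case: (mxtens_indexP b) => k l.
by rewrite !tensmxE.
Qed.

Lemma tens3E (R : numFieldType) m n p q r s (X : 'M[R]_(m,n)) (Y : 'M[R]_(p,q))
  (W : 'M[R]_(r,s)) i j k l u v :
  tensmx (tensmx X Y) W (mxtens_index (mxtens_index (i, j), u))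
    (mxtens_index (mxtens_index (k, l), v)) = X i k * Y j l * W u v.
Proof. by rewrite !tensmxE. Qed.

Lemma tens3_eqP (R : numFieldType) m n p q r s (X X' : 'M[R]_(m,n)) (Y : 'M[R]_(p,q))
  (W W' : 'M[R]_(r,s)) :
  tensmx (tensmx X Y) W = tensmx (tensmx X' Y) W' <->
  forall i k j l u v, X i k * Y j l * W u v = X' i k * Y j l * W' u v.
Proof.
split.
  by move=> E i k j l u v; rewrite -!tens3E E.
move=> H; apply/matrixP=> a b.
case: (mxtens_indexP a) => ij u; case: (mxtens_indexP b) => kl v.
case: (mxtens_indexP ij) => i j; case: (mxtens_indexP kl) => k l.
by rewrite !tens3E.
Qed.

Lemma mx_nz (R : numFieldType) m n (M : 'M[R]_(m,n)) :
  M != 0 -> exists i j, M i j != 0.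
Proof.
move=> nz; case: (pickP (fun ij : 'I_m * 'I_n => M ij.1 ij.2 != 0)) => [[i j] /= h|h].
  by exists i, j.
case/eqP: nz; apply/matrixP=> i j; rewrite mxE.
by move/negbFE: (h (i, j)) => /eqP.
Qed.

Theorem theorem2p3 (R : numFieldType) (n : nat) (A : 'M[R]_n) :
  A ^+ 3 != 0 ->
  [/\ (tensmx (tensmx A (A ^+ 3)) (A ^+ 2) = tensmx (tensmx (A ^+ 2) (A ^+ 3)) A
         <-> tensmx (A ^+ 2) A = tensmx A (A ^+ 2)),
      (tensmx (A ^+ 2) A = tensmx A (A ^+ 2) <-> exists mu : R, A ^+ 2 = mu *: A) &
      (exists mu : R, A ^+ 2 = mu *: A) <->
         tensmx (tensmx A (A ^+ 3)) (A ^+ 2) = tensmx (tensmx (A ^+ 2) (A ^+ 3)) A].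
Proof.
move=> A3nz.
have [c [d cd3]] : exists c d, (A ^+ 3) c d != 0.
  exact: mx_nz.
have Anz : A != 0.
  by apply: contraNneq A3nz => ->; rewrite expr0n.
have [c' [d' cd1]] := @mx_nz _ _ _ A Anz.
set P := forall a b e f, A a b * (A ^+ 2) e f = (A ^+ 2) a b * A e f.
have iP : tensmx (tensmx A (A ^+ 3)) (A ^+ 2) = tensmx (tensmx (A ^+ 2) (A ^+ 3)) A <-> P.
  split.
    move=> /tens3_eqP H a b e f; have := H a b c d e f.
    by rewrite mulrAC [_ * _ * A e f]mulrAC => /(mulIf cd3).
  by move=> H; apply/tens3_eqP => i k j l u v; rewrite mulrAC H mulrAC.
have iiP : tensmx (A ^+ 2) A = tensmx A (A ^+ 2) <-> P.
  split; first by move=> /tens_eqP H a b e f; rewrite H.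
  by move=> H; apply/tens_eqP => a b e f; rewrite H.
have iiiP : (exists mu : R, A ^+ 2 = mu *: A) <-> P.
  split.
    by move=> [mu E] a b e f; rewrite E; rewrite !mxE mulrCA mulrA.
  move=> H; exists ((A ^+ 2) c' d' / A c' d'); apply/matrixP => a b.
  by rewrite [in RHS]mxE mulrAC -H [A c' d' * _]mulrC mulfK.
split; tauto.
Qed.
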